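(* Let $G$ be a graph, $H$ a non-null subgraph of $G$, and let $n_0$ denote the maximum number of vertices in a connected component of $H$. For every independent set $I\subseteq V(G)\setminus V(H)$ of $G$ and every non-negative integer $k$ with $k\leq\alpha(H)-i(H-N(I))$, there exists an independent set $I_1\subseteq I$ with $|I_1|\leq kn_0$ such that $k\leq\alpha(H)-i(H-N(I_1))$.
   Context: All graphs are finite and simple; the null graph is allowed. For a graph $F$, $\alpha(F)$ is the maximum size of an independent set and $i(F)$ the minimum size of an inclusion-maximal independent set (both $0$ for the null graph). $N(I)=\bigcup_{v\in I}N_G(v)$ is the set of neighbors in $G$ of vertices of $I$, and $H-N(I)$ denotes the graph obtained from $H$ by deleting the vertices of $N(I)\cap V(H)$. *)

(* Defs.v *)
From mathcomp Require Import all_boot.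
Set Implicit Arguments. Unset Strict Implicit. Unset Printing Implicit Defensive.

Definition simple_graph (T : finType) (e : rel T) : Prop :=
  symmetric e /\ irreflexive e.

Definition subgraph (T : finType) (e : rel T) (VH : {set T}) (eH : rel T) : Prop :=
  [/\ symmetric eH, irreflexive eH,
      (forall x y, eH x y -> (x \in VH) && (y \in VH)) &
      (forall x y, eH x y -> e x y)].

Definition indep (T : finType) (r : rel T) (S : {set T}) : bool :=
  [forall x in S, forall y in S, ~~ r x y].

(* Graph F given by vertex set V and edge relation r (restricted to V). *)
Definition indep_in (T : finType) (V : {set T}) (r : rel T) (S : {set T}) : bool :=
  (S \subset V) && indep r S.

Definition maximal_indep (T : finType) (V : {set T}) (r : rel T) (S : {set T}) : bool :=
  indep_in V r S && [forall v in V :\: S, ~~ indep_in V r (v |: S)].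

Definition alpha (T : finType) (V : {set T}) (r : rel T) : nat :=
  \max_(S : {set T} | indep_in V r S) #|S|.

(* i(F): minimum size of an inclusion-maximal independent set (0 for the null graph) *)
Definition inum (T : finType) (V : {set T}) (r : rel T) : nat :=
  \big[minn/#|V|]_(S : {set T} | maximal_indep V r S) #|S|.

Definition nbhd (T : finType) (e : rel T) (I : {set T}) : {set T} :=
  [set y | [exists x in I, e x y]].

Definition max_comp (T : finType) (VH : {set T}) (eH : rel T) : nat :=
  \max_(x in VH) #|[set y in VH | connect eH x y]|.

(* Main.v *)
Require Import Defs.
From mathcomp Require Import all_boot.
From mathcomp Require Import zify.

Lemma bigmin_le (I : finType) (P : pred I) (F : I -> nat) x0 j :
  P j -> \big[minn/x0]_(i | P i) F i <= F j.
Proof.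
move=> Pj; rewrite unlock.
have : j \in index_enum I by rewrite mem_index_enum.
elim: (index_enum I) => //= a r IH.
rewrite inE; case: eqP => [<- _|_ /IH H] /=; first by rewrite Pj geq_minl.
case: (P a) => //; exact: leq_trans (geq_minr _ _) H.
Qed.

Local Set Implicit Arguments. Local Unset Strict Implicit.
Section Aux.
Variables (T : finType) (r : rel T).
Hypothesis rsym : symmetric r.
Hypothesis rirr : irreflexive r.

Lemma indepP (S : {set T}) : reflect (forall x y, x \in S -> y \in S -> ~~ r x y) (indep r S).
Proof.
apply: (iffP forall_inP) => [H x y xS yS | H x xS].
  by have /forall_inP := H x xS; apply.
by apply/forall_inP => y yS; apply: H.
Qed.

Lemma indepS (S1 S2 : {set T}) : S1 \subset S2 -> indep r S2 -> indep r S1.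
Proof.
move=> /subsetP s12 /indepP h; apply/indepP => x y xS yS; apply: h; exact: s12.
Qed.

Lemma indep0 (V : {set T}) : indep_in V r set0.
Proof. by rewrite /indep_in sub0set; apply/indepP => x y; rewrite in_set0. Qed.

Lemma alpha_ge (V S : {set T}) : indep_in V r S -> #|S| <= alpha V r.
Proof. by move=> h; rewrite /alpha (leq_bigmax_cond _ h). Qed.

Lemma alpha_le (V : {set T}) m : (forall S, indep_in V r S -> #|S| <= m) -> alpha V r <= m.
Proof. by move=> h; apply/bigmax_leqP. Qed.

Lemma alpha_ex (V : {set T}) : exists2 S, indep_in V r S & #|S| = alpha V r.
Proof.
case: (arg_maxnP (fun S : {set T} => #|S|) (indep0 V)) => S hS hmax.
exists S => //; apply/eqP; rewrite eqn_leq alpha_ge //=.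
by apply: alpha_le => S' /hmax.
Qed.

Lemma extend (V S0 : {set T}) : indep_in V r S0 ->
  exists2 M, maximal_indep V r M & S0 \subset M.
Proof.
move=> h0.
have h0' : indep_in V r S0 && (S0 \subset S0) by rewrite h0 subxx.
case: (@arg_maxnP _ S0 (fun S : {set T} => indep_in V r S && (S0 \subset S)) (fun S : {set T} => #|S|) h0') => M /andP [hM sM] hmax.
exists M => //; rewrite /maximal_indep hM /=.
apply/forall_inP => v /setDP [vV vM]; apply/negP => hv.
have := hmax (v |: M); rewrite hv (subset_trans sM (subsetUr _ _)) => /(_ isT).
by rewrite cardsU1 vM; lia.
Qed.

Lemma inum_ex (V : {set T}) : exists2 M, maximal_indep V r M & #|M| <= inum V r.
Proof.
rewrite /inum; apply: (big_ind (fun x => exists2 M, maximal_indep V r M & #|M| <= x)).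
- case: (extend (indep0 V)) => M hM _; exists M => //.
  by move: hM => /andP [/andP [/subset_leq_card]].
- move=> x y [M hM hx] [M' hM' hy]; rewrite /minn; case: ifP => _.
  + by exists M.
  + by exists M'.
- by move=> M hM; exists M.
Qed.

Definition closedH (U : {set T}) := forall x y, r x y -> (x \in U) = (y \in U).

Lemma alpha_split (U A : {set T}) : A \subset U -> closedH A ->
  alpha U r = alpha A r + alpha (U :\: A) r.
Proof.
move=> AU cA; apply/eqP; rewrite eqn_leq; apply/andP; split.
  apply: alpha_le => S /andP [SU Sind].
  rewrite -(cardsID A S) leq_add // alpha_ge // /indep_in.
    by rewrite subsetIr (indepS (subsetIl _ _) Sind).
  by rewrite setSD // (indepS (subsetDl _ _) Sind).
case: (alpha_ex A) => SA /andP [SAA SAi] <-.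
case: (alpha_ex (U :\: A)) => SB /andP [SBU SBi] <-.
have dis : SA :&: SB = set0.
  apply/setP => y; rewrite !inE; apply/negP => /andP [yA yB].
  by move: (subsetP SBU y yB); rewrite inE (subsetP SAA y yA).
rewrite -cardsUI dis cards0 addn0; apply: alpha_ge.
rewrite /indep_in subUset (subset_trans SAA AU)
  (subset_trans SBU (subsetDl _ _)) /=.
apply/indepP => x y /setUP [xA|xB] /setUP [yA|yB].
- by move/indepP: SAi; apply.
- apply/negP => /cA; rewrite (subsetP SAA x xA) => /esym yA'.
  by move: (subsetP SBU y yB); rewrite inE yA'.
- apply/negP => /cA; rewrite (subsetP SAA y yA) => xA'.
  by move: (subsetP SBU x xB); rewrite inE xA'.
- by move/indepP: SBi; apply.
Qed.

Lemma card_split (M U A : {set T}) : A \subset U ->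
  #|M :&: U| = #|M :&: A| + #|M :&: (U :\: A)|.
Proof.
move=> AU; rewrite -(cardsID A (M :&: U)); congr (_ + _); apply: eq_card => y;
  have := subsetP AU y; rewrite !inE;
  by case: (y \in A); case: (y \in U); case: (y \in M) => //= ->.
Qed.

Variable VH : {set T}.
Hypothesis hV : forall x y, r x y -> (x \in VH) && (y \in VH).
Variable n0 : nat.
Definition comp x := [set y in VH | connect r x y].
Hypothesis hn0 : forall x, x \in VH -> #|comp x| <= n0.
Variable M : {set T}.
Hypothesis Mind : indep r M.

Lemma comp_closed x : closedH (comp x).
Proof.
move=> y z ryz; rewrite !inE; have /andP [-> ->] := hV ryz => /=.
apply/idP/idP => h; apply: connect_trans h _; apply: connect1 => //.
by rewrite rsym.
Qed.

Lemma comp_sub x (U : {set T}) : x \in U -> closedH U -> comp x \subset U.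
Proof.
move=> xU cU; apply/subsetP => y; rewrite inE => /andP [_ cxy].
have cl : closed r U by move=> a b /cU.
by rewrite -(closed_connect cl cxy).
Qed.

Lemma closedD (U A : {set T}) : closedH U -> closedH A -> closedH (U :\: A).
Proof. by move=> cU cA x y rxy; rewrite !inE (cU _ _ rxy) (cA _ _ rxy). Qed.

Lemma closedU (U A : {set T}) : closedH U -> closedH A -> closedH (U :|: A).
Proof. by move=> cU cA x y rxy; rewrite !inE (cU _ _ rxy) (cA _ _ rxy). Qed.

Lemma alpha0 : alpha set0 r = 0.
Proof.
apply/eqP; rewrite -leqn0; apply: alpha_le => S /andP [/subset_leq_card].
by rewrite cards0.
Qed.

Lemma pick_comps n : forall (U : {set T}) k, #|U| <= n -> U \subset VH -> closedH U ->
  #|M :&: U| + k <= alpha U r ->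
  exists U' : {set T}, [/\ U' \subset U, closedH U', #|U'| <= k * n0 &
                 #|M :&: U'| + k <= alpha U' r].
Proof.
elim: n => [|n IH] U [|k] hn UV cU hk.
- exists set0; rewrite sub0set cards0 setI0 cards0 alpha0; split => //.
  by move=> x y _; rewrite !in_set0.
- move: hn; rewrite leqn0 cards_eq0 => /eqP U0.
  by move: hk; rewrite U0 alpha0 addnS.
- exists set0; rewrite sub0set cards0 setI0 cards0 alpha0; split => //.
  by move=> x y _; rewrite !in_set0.
case: (set_0Vmem U) => [U0|[x xU]].
  by move: hk; rewrite U0 alpha0 addnS.
have CU := comp_sub xU cU.
have xC : x \in comp x by rewrite inE (subsetP UV x xU) connect0.
have hn2 : #|U :\: comp x| <= n.
  rewrite -ltnS; apply: leq_trans hn; apply: proper_card.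
  by apply/properP; split; [exact: subsetDl | exists x => //; rewrite inE xC].
have UV2 : U :\: comp x \subset VH by exact: subset_trans (subsetDl _ _) UV.
have cU2 : closedH (U :\: comp x) by exact: closedD (comp_closed x).
have sa := alpha_split CU (comp_closed x).
have sm := card_split M CU.
have aC : #|M :&: comp x| <= alpha (comp x) r.
  by rewrite alpha_ge // /indep_in subsetIr (indepS (subsetIl _ _) Mind).
have aC2 : #|M :&: (U :\: comp x)| <= alpha (U :\: comp x) r.
  by rewrite alpha_ge // /indep_in subsetIr (indepS (subsetIl _ _) Mind).
case: (leqP (#|M :&: comp x|).+1 (alpha (comp x) r)) => hC.
- set k' := k.+1 - (alpha (comp x) r - #|M :&: comp x|).
  have hk2 : #|M :&: (U :\: comp x)| + k' <= alpha (U :\: comp x) r by rewrite /k'; lia.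
  case: (IH _ k' hn2 UV2 cU2 hk2) => U2 [s2 c2 z2 h2].
  have z3 : k' * n0 <= k * n0 by apply: leq_mul => //; lia.
  have dis : U2 :\: comp x = U2.
    apply/setP => y; rewrite !inE; case yU2: (y \in U2); rewrite ?andbF //.
    by move: (subsetP s2 y yU2); rewrite !inE andbT => /andP [-> _].
  exists (comp x :|: U2); split.
  + by rewrite subUset CU (subset_trans s2 (subsetDl _ _)).
  + exact: closedU (comp_closed x) c2.
  + rewrite mulSn; apply: leq_trans (leq_add (hn0 (subsetP UV x xU)) (leq_trans z2 z3)).
    by rewrite cardsU leq_subr.
  + have CU' : comp x \subset comp x :|: U2 by exact: subsetUl.
    rewrite (alpha_split CU' (comp_closed x)) (card_split M CU').
    by rewrite setDUl setDv set0U dis; lia.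
- have hk2 : #|M :&: (U :\: comp x)| + k.+1 <= alpha (U :\: comp x) r by lia.
  case: (IH _ k.+1 hn2 UV2 cU2 hk2) => U2 [s2 c2 z2 h2].
  exists U2; split => //; exact: subset_trans s2 (subsetDl _ _).
Qed.

End Aux.
Local Unset Implicit Arguments.

Theorem lemma8 (T : finType) (e : rel T) (VH : {set T}) (eH : rel T) :
  simple_graph e -> subgraph e VH eH -> VH != set0 ->
  forall I : {set T}, indep e I -> [disjoint I & VH] ->
  forall k : nat, k <= alpha VH eH - inum (VH :\: nbhd e I) eH ->
  exists I1 : {set T},
    [/\ I1 \subset I, indep e I1, #|I1| <= k * max_comp VH eH &
        k <= alpha VH eH - inum (VH :\: nbhd e I1) eH].
Proof.
move=> _ [rsym rirr hV _] _ I Iind _ [|k] hk.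
  by exists set0; rewrite sub0set cards0 (indepS (sub0set I) Iind).
set V0 := VH :\: nbhd e I.
case: (inum_ex eH V0) => M /andP [/andP [MV0 Mind] Mmax] Minum.
have MVH : M \subset VH by exact: subset_trans MV0 (subsetDl _ _).
have cVH : closedH eH VH by move=> x y /hV /andP [-> ->].
have hn0 : forall x, x \in VH -> #|comp eH VH x| <= max_comp VH eH.
  by move=> x xV; rewrite /max_comp (leq_bigmax_cond _ xV).
have hMk : #|M :&: VH| + k.+1 <= alpha VH eH.
  by rewrite (setIidPl MVH); move: hk Minum; rewrite /V0; lia.
case: (pick_comps rsym hV hn0 Mind (leqnn _) (subxx VH) cVH hMk)
  => U [UV cU zU hU].
pose g y := odflt y [pick x in I | e x y].
set I1 := g @: (U :&: nbhd e I).
have gP : forall y, y \in nbhd e I -> (g y \in I) && e (g y) y.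
  move=> y; rewrite inE => /existsP [x /andP [xI exy]].
  rewrite /g; case: pickP => [z /andP [-> ->] //|/(_ x)].
  by rewrite xI exy.
have I1I : I1 \subset I.
  by apply/subsetP => z /imsetP [y /setIP [_ yN] ->]; case/andP: (gP y yN).
exists I1; split => //.
- exact: indepS I1I Iind.
- apply: leq_trans zU; apply: leq_trans (leq_imset_card _ _) _.
  exact: subset_leq_card (subsetIl _ _).
set V1 := VH :\: nbhd e I1.
have NU : forall y, y \in U -> (y \in nbhd e I1) = (y \in nbhd e I).
  move=> y yU; apply/idP/idP; rewrite !inE => /existsP [x /andP [xI exy]].
    by apply/existsP; exists x; rewrite (subsetP I1I x xI).
  have yN : y \in nbhd e I by rewrite inE; apply/existsP; exists x; rewrite xI.
  apply/existsP; exists (g y); case/andP: (gP y yN) => _ ->.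
  by rewrite andbT; apply/imsetP; exists y => //; rewrite inE yU.
have VU : forall y, y \in U -> (y \in V1) = (y \in V0).
  by move=> y yU; rewrite /V1 /V0 !in_setD NU.
have MUi : indep_in V1 eH (M :&: U).
  rewrite /indep_in (indepS (subsetIl _ _) Mind) andbT.
  apply/subsetP => y /setIP [yM yU]; rewrite VU //; exact: subsetP MV0 y yM.
case: (extend MUi) => M1 hM1 sM1.
move: (hM1) => /andP [/andP [M1V1 M1ind] _].
have M1U : M1 :&: U \subset M :&: U.
  apply/subsetP => y /setIP [yM1 yU]; rewrite inE yU andbT.
  apply/negPn/negP => yM.
  have yV0 : y \in V0 by rewrite -VU // (subsetP M1V1 y yM1).
  move/forall_inP: Mmax => /(_ y); rewrite inE yM yV0 => /(_ isT) /negP; apply.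
  rewrite /indep_in subUset sub1set yV0 MV0 /=.
  apply/indepP => a b /setU1P [->|aM] /setU1P [->|bM].
  - by rewrite rirr.
  - apply/negP => eyb; have bU : b \in U by rewrite -(cU _ _ eyb).
    have bM1 : b \in M1 by apply: (subsetP sM1); rewrite inE bM bU.
    by move/indepP: M1ind => /(_ y b yM1 bM1); rewrite eyb.
  - apply/negP => eay; have aU : a \in U by rewrite (cU _ _ eay).
    have aM1 : a \in M1 by apply: (subsetP sM1); rewrite inE aM aU.
    by move/indepP: M1ind => /(_ a y aM1 yM1); rewrite eay.
  - by move/indepP: Mind; apply.
have out : #|M1 :\: U| <= alpha (VH :\: U) eH.
  apply: alpha_ge; rewrite /indep_in (indepS (subsetDl _ _) M1ind) andbT.
  by apply: setSD; exact: subset_trans M1V1 (subsetDl _ _).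
have sp := alpha_split UV cU.
have i1 : inum V1 eH <= #|M1| by rewrite /inum; apply: bigmin_le.
have c1 := cardsID U M1.
have c2 := subset_leq_card M1U.
move: i1 c1 c2 out sp hU; clear; lia.
Qed.
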